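(* Let $(\mu,\sigma)\in\mathsf{UM}\rtimes\mathsf{US}$, written $\mu=1+\mu_{+}$ with $\mu_{+}\in\mathbb{K}[[\mathtt{x}]]^{+}$ and $\sigma=\mathtt{x}+\sigma_{+}$ with $\sigma_{+}\in\mathfrak{M}^{+}$, and let $\lambda\in\mathbb{K}$. Then the series $$(\mu,\sigma)^{\rtimes\lambda}:=\sum_{n\ge0}\binom{\lambda}{n}(\mu_{+},\sigma_{+})^{\rtimes n}$$ converges in $\mathbb{K}[[\mathtt{x}]]\times\mathfrak{M}$ and its sum belongs to $\mathsf{UM}\rtimes\mathsf{US}$.
   Context: $\mathbb{K}$ is a field of characteristic zero (discrete topology); $\mathbb{K}[[\mathtt{x}]]$ has the $(\mathtt{x})$-adic topology given by the order valuation $\nu$ ($\nu(0)=+\infty$). $\mathfrak{M}:=\mathtt{x}\mathbb{K}[[\mathtt{x}]]$; $\mathbb{K}[[\mathtt{x}]]\times\mathfrak{M}$ has the product topology and componentwise vector space structure. $\mathbb{K}[[\mathtt{x}]]^{+}:=\mathfrak{M}$, $\mathfrak{M}^{+}:=\{\sigma\in\mathfrak{M}:\nu(\sigma)>1\}$. For $h=\sum h_n\mathtt{x}^n$ and $\tau\in\mathfrak{M}$, $h\circ\tau:=\sum h_n\tau^n$. Product: $(\mu_1,\sigma_1)\rtimes(\mu_2,\sigma_2):=((\mu_1\circ\sigma_2)\mu_2,\sigma_1\circ\sigma_2)$; $(\mu,\sigma)^{\rtimes0}:=(1,\mathtt{x})$, $(\mu,\sigma)^{\rtimes n}$ the $n$-fold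 product. $\mathsf{UM}:=\{1+\mu_{+}:\mu_{+}\in\mathbb{K}[[\mathtt{x}]]^{+}\}$, $\mathsf{US}:=\{\mathtt{x}+\sigma_{+}:\sigma_{+}\in\mathfrak{M}^{+}\}$, and $\mathsf{UM}\rtimes\mathsf{US}$ (the Riordan group) is the set of pairs $(\mu,\sigma)$ with $\mu\in\mathsf{UM}$, $\sigma\in\mathsf{US}$. Generalized binomial coefficients: $\binom{\lambda}{n}:=\frac{\lambda(\lambda-1)\cdots(\lambda-n+1)}{n!}$, $\binom{\lambda}{0}=1$. *)

(* Defs.v *)
From mathcomp Require Import all_boot all_order all_algebra.
Set Implicit Arguments. Unset Strict Implicit. Unset Printing Implicit Defensive.
Import Order.TTheory GRing.Theory Num.Theory.
Local Open Scope ring_scope.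

Section FPS.
Variable K : fieldType.

Definition fps := nat -> K.

Definition fps1 : fps := fun n => if n == 0%N then 1 else 0.
Definition fpsX : fps := fun n => if n == 1%N then 1 else 0.
Definition fps_add (f g : fps) : fps := fun n => f n + g n.
Definition fps_sub (f g : fps) : fps := fun n => f n - g n.
Definition fps_mul (f g : fps) : fps :=
  fun n => \sum_(i < n.+1) f i * g (n - i)%N.
Fixpoint fps_pow (f : fps) (k : nat) : fps :=
  match k with O => fps1 | S k' => fps_mul f (fps_pow f k') end.

(* composition h o tau := sum_k h_k tau^k, for tau in M = x K[[x]]
   (then tau^k has order >= k, so coefficient n only involves k <= n) *)
Definition fps_comp (h tau : fps) : fps :=
  fun n => \sum_(k < n.+1) h k * fps_pow tau k n.

Definition inM (f : fps) : Prop := f 0%N = 0.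
Definition inMplus (f : fps) : Prop := f 0%N = 0 /\ f 1%N = 0.
Definition UM (mu : fps) : Prop := inM (fps_sub mu fps1).
Definition US (sg : fps) : Prop := inMplus (fps_sub sg fpsX).
Definition in_Riordan (p : fps * fps) : Prop := UM p.1 /\ US p.2.

Definition rtimes (p q : fps * fps) : fps * fps :=
  (fps_mul (fps_comp p.1 q.2) q.1, fps_comp p.2 q.2).

Fixpoint rpow (p : fps * fps) (n : nat) : fps * fps :=
  match n with O => (fps1, fpsX) | S n' => rtimes p (rpow p n') end.

Definition gbinom (l : K) (n : nat) : K :=
  (\prod_(i < n) (l - i%:R)) / (n`!)%:R.

Definition psum (c : nat -> K) (p : nat -> fps * fps) (N : nat) : fps * fps :=
  (fun k => \sum_(n < N) c n * (p n).1 k, fun k => \sum_(n < N) c n * (p n).2 k).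

(* convergence in the (x)-adic (product) topology, K discrete:
   eventually every coefficient below any bound m is stabilized at L's *)
Definition fps_pair_converges (S : nat -> fps * fps) (L : fps * fps) : Prop :=
  forall m : nat, exists N0 : nat, forall N : nat, (N0 <= N)%N ->
    forall k : nat, (k < m)%N -> (S N).1 k = L.1 k /\ (S N).2 k = L.2 k.

End FPS.

(* Main.v *)
Require Import Defs.
From mathcomp Require Import all_boot all_order all_algebra.
From mathcomp Require Import zify.
Import GRing.Theory.
Local Open Scope ring_scope.

Section Aux.
Set Implicit Arguments.
Variable K : fieldType.

Definition ordge (f : fps K) (a : nat) := forall n, (n < a)%N -> f n = 0.

Lemma mul_ord f g a c : ordge f a -> ordge g c -> ordge (fps_mul f g) (a + c).
Proof.
move=> hf hg n hn; rewrite /fps_mul big1 // => i _.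
have [hi|hi] := ltnP i a; first by rewrite hf // mul0r.
rewrite hg ?mulr0 //; move: (nat_of_ord i) (ltn_ord i) hi => j hj hi; lia.
Qed.

Lemma pow_ord t b : ordge t b -> forall j, ordge (fps_pow t j) (j * b).
Proof.
move=> ht; elim=> [|j IH] /=; first by move=> n.
have := mul_ord ht IH; rewrite mulSn //.
Qed.

Lemma comp_ord h t a b : ordge h a -> ordge t b -> ordge (fps_comp h t) (a * b).
Proof.
move=> hh ht n hn; rewrite /fps_comp big1 // => k _.
have [hk|hk] := ltnP k a; first by rewrite hh // mul0r.
rewrite (pow_ord ht) ?mulr0 //.
have : (a * b <= k * b)%N by rewrite leq_mul2r hk orbT.
lia.
Qed.

Lemma rpow_ord (mp sp : fps K) : ordge mp 1 -> ordge sp 2 ->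
  forall n, ordge (rpow (mp, sp) n).1 n /\ ordge (rpow (mp, sp) n).2 n.+1.
Proof.
move=> hm hs; elim=> [|n [IH1 IH2]] /=.
  by split=> // k; rewrite ltnS leqn0 => /eqP ->.
split.
  have := mul_ord (comp_ord hm IH2) IH1; rewrite mul1n /=.
  by move=> H k hk; apply: H; lia.
have := comp_ord hs IH2 => H k hk; apply: H; lia.
Qed.

Lemma sum_trunc (F : nat -> K) k N : (k < N)%N -> (forall n, (k < n)%N -> F n = 0) ->
  \sum_(n < N) F n = \sum_(n < k.+1) F n.
Proof.
move=> hk hF; rewrite -(subnKC hk) big_split_ord /= [X in _ + X]big1 ?addr0 // => i _.
by apply: hF; rewrite /=; lia.
Qed.

End Aux.

Theorem mainTheorem13 (K : fieldType) (charK0 : [pchar K] =i pred0)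
  (mu sg : fps K) (hmu : UM mu) (hsg : US sg) (l : K) :
  exists L : fps K * fps K,
    fps_pair_converges
      (psum (gbinom l) (rpow (fps_sub mu (fps1 K), fps_sub sg (fpsX K)))) L
    /\ in_Riordan L.
Proof.
set mp := fps_sub mu (fps1 K); set sp := fps_sub sg (fpsX K).
have hm : ordge mp 1 by move=> n; rewrite ltnS leqn0 => /eqP ->; exact: hmu.
have hs : ordge sp 2.
  case: hsg => h0 h1; move=> [|[|n]] // _.
have R := rpow_ord hm hs.
exists (fun k => \sum_(n < k.+1) gbinom l n * (rpow (mp, sp) n).1 k,
        fun k => \sum_(n < k.+1) gbinom l n * (rpow (mp, sp) n).2 k).
have g0 : gbinom l 0 = 1 by rewrite /gbinom big_ord0 fact0 divr1.
split.
  move=> m; exists m => N hN k hk; rewrite /psum /=; split.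
    have h1 : (k < N)%N by lia.
    refine (@sum_trunc K (fun n => gbinom l n * (rpow (mp, sp) n).1 k) k N h1 _).
    by move=> n hn; rewrite (proj1 (R n)) ?mulr0.
  have h1 : (k < N)%N by lia.
  refine (@sum_trunc K (fun n => gbinom l n * (rpow (mp, sp) n).2 k) k N h1 _).
  by move=> n hn; rewrite (proj2 (R n)) ?mulr0 //; lia.
split.
  by rewrite /UM /inM /fps_sub /= big_ord1 g0 mul1r /fps1 /= subrr.
rewrite /US /inMplus /fps_sub /=; split.
  by rewrite big_ord1 /fpsX /= mulr0 subrr.
have e1 : (rpow (mp, sp) 1).2 1%N = 0 by apply: (proj2 (R 1%N)).
have e2 : \sum_(n < 2) gbinom l n * (rpow (mp,sp) n).2 1%N =
   gbinom l 0 * fpsX K 1 + gbinom l 1 * (rpow (mp,sp) 1).2 1%N.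
  by rewrite big_ord_recr big_ord1.
rewrite e2 e1 mulr0 addr0 g0 mul1r.
by rewrite /fpsX /= subrr.
Qed.
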